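(* Consider the CT–DT interconnected system described in the context, and let Assumptions (A1), (A2), (A3) hold with respect to the norms $\|\cdot\|_{\mathcal X}$ and $\|\cdot\|_{\mathcal Z}$. Suppose that $$-\mathsf{osLip}_x(f)\,\big(1-\mathsf{Lip}_z(\mathsf G)\big) > \mathsf{Lip}_z(f)\,\mathsf{Lip}_x(\mathsf G).$$ Then for every $n\in\mathbb Z_{>0}$ and every $T>0$ there exists a vector $\eta=(\eta_1,\eta_2)\in\mathbb R^2_{>0}$ such that, with the composite norm $\|(x,z)\|_{\mathsf{cmp}}:=\big\|(\|x\|_{\mathcal X},\|z\|_{\mathcal Z})\big\|_{2,[\eta]}$ on $\mathbb R^{n_x+n_z}$, where $\|(v_1,v_2)\|_{2,[\eta]}:=\sqrt{\eta_1v_1^2+\eta_2v_2^2}$: (i) the interconnected system is $T$-discrete-time contractive with respect to $\|\cdot\|_{\mathsf{cmp}}$, i.e., there is $b\in(0,1)$ with $\|y(kT)-\bar y(kT)\|_{\mathsf{cmp}}\le b^k\|y(0)-\bar y(0)\|_{\mathsf{cmp}}$ for all $k\in\mathbb Z_{\ge0}$ and all pairs of solutions $y,\bar y$; (ii) the origin is globally exponentially stable for the interconnected system, i.e., there exist $r\ge0$, $a>0$ with $\|y(t)\|_{\mathsf{cmp}}\le r e^{-at}\|y(0)\|_{\mathsf{cmp}}$ for all $t\ge0$ and all solutions $y$.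
   Context: Setup. Let $\|\cdot\|_{\mathcal X}$ be a norm on $\mathbb R^{n_x}$ and $\|\cdot\|_{\mathcal Z}$ a norm on $\mathbb R^{n_z}$; $\mathcal X\subseteq\mathbb R^{n_x}$, $\mathcal Z\subseteq\mathbb R^{n_z}$ are convex sets. Let $f:\mathcal X\times\mathcal Z\to\mathbb R^{n_x}$ and $\mathsf G:\mathcal X\times\mathcal Z\to\mathcal Z$ be continuous, and define $\mathsf G^1(x,z)=\mathsf G(x,z)$, $\mathsf G^{m+1}(x,z)=\mathsf G(x,\mathsf G^m(x,z))$. For $T>0$ and $n\in\mathbb Z_{>0}$ the interconnected (sampled-data) system is $\dot x(t)=f(x(t),z(t))$, $z_k=\mathsf G^n(x(kT),z_{k-1})$, $z(t)=z_k$ for $t\in[kT,(k+1)T)$, $k\in\mathbb Z_{\ge0}$, with state $y(t)=(x(t),z(t))$; $\mathcal X\times\mathcal Z$ is assumed forward invariant. It is assumed $f(0,0)=0$ and $\mathsf G(0,0)=0$. Lipschitz notions. $\mathsf{Lip}_z(f):=\sup_x\sup_{z_1\ne z_2}\|f(x,z_1)-f(x,z_2)\|_{\mathcal X}/\|z_1-z_2\|_{\mathcal Z}$; $\mathsf{Lip}_x(f)$, $\mathsf{Lip}_x(\mathsf G)$, $\mathsf{Lip}_z(\mathsf G)$ are defined analogously (sup over the other argument, with the appropriate norms). Let $\llbracket\cdot;\cdot\rrbracket$ be a weak pairing on $\mathbb R^{n_x}$ compatible with $\|\cdot\|_{\mathcal X}$ (in particular $\llbracket x;x\rrbracket=\|x\|_{\mathcal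 X}^2$, sub-additive in first argument, and $\llbracket x;y\rrbracket\le\|x\|_{\mathcal X}\|y\|_{\mathcal X}$; for the Euclidean norm it is the inner product). The one-sided Lipschitz constant is $\mathsf{osLip}_x(f):=\sup_z\sup_{x_1\ne x_2}\llbracket f(x_1,z)-f(x_2,z);x_1-x_2\rrbracket/\|x_1-x_2\|_{\mathcal X}^2$, and for a map $F:\mathcal X\to\mathbb R^{n_x}$, $\mathsf{osLip}(F):=\sup_{x_1\ne x_2}\llbracket F(x_1)-F(x_2);x_1-x_2\rrbracket/\|x_1-x_2\|_{\mathcal X}^2$. Assumptions. (A1) $x\mapsto f(x,z)$ is Lipschitz uniformly in $z\in\mathcal Z$ ($\mathsf{Lip}_x(f)<\infty$). (A2) $\mathsf{Lip}_z(f)\in(0,\infty)$ and $\mathsf{Lip}_x(\mathsf G)\in(0,\infty)$. (A3) $\mathsf{Lip}_z(\mathsf G)<1$. *)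

(* Defs.v *)
From HB Require Import structures.
From mathcomp Require Import all_boot all_order all_algebra.
From mathcomp Require Import all_classical all_reals all_analysis.
Set Implicit Arguments. Unset Strict Implicit. Unset Printing Implicit Defensive.
Import Order.TTheory GRing.Theory Num.Theory.
Import numFieldNormedType.Exports.
Local Open Scope classical_set_scope.
Local Open Scope ring_scope.

Definition is_norm (R : realType) (n : nat) (N : 'rV[R]_n -> R) : Prop :=
  [/\ (forall x, 0 <= N x),
      (forall x, N x = 0 -> x = 0),
      (forall (a : R) x, N (a *: x) = `|a| * N x) &
      (forall x y, N (x + y) <= N x + N y)].

Definition is_weak_pairing (R : realType) (n : nat)
    (wp : 'rV[R]_n -> 'rV[R]_n -> R) : Prop :=
  [/\ (forall x1 x2 y, wp (x1 + x2) y <= wp x1 y + wp x2 y)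
      /\ (forall y, continuous (fun x : 'rV[R]_n => wp x y)),
      (forall (a : R) x y, 0 <= a ->
          wp (a *: x) y = a * wp x y /\ wp x (a *: y) = a * wp x y),
      (forall x y, wp (- x) (- y) = wp x y),
      (forall x, x != 0 -> 0 < wp x x) &
      (forall x y, `|wp x y| <= Num.sqrt (wp x x) * Num.sqrt (wp y y))].

Definition wp_compatible (R : realType) (n : nat)
    (wp : 'rV[R]_n -> 'rV[R]_n -> R) (N : 'rV[R]_n -> R) : Prop :=
  forall x, wp x x = N x ^+ 2.

Definition Lip_fst (R : realType) (m p q : nat)
    (N1 : 'rV[R]_m -> R) (N2 : 'rV[R]_q -> R)
    (A : set 'rV[R]_m) (B : set 'rV[R]_p)
    (F : 'rV[R]_m -> 'rV[R]_p -> 'rV[R]_q) : \bar R :=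
  ereal_sup [set e | exists a1 a2 b, [/\ A a1, A a2, B b, a1 != a2 &
      e = (N2 (F a1 b - F a2 b) / N1 (a1 - a2))%:E]].

Definition Lip_snd (R : realType) (m p q : nat)
    (N1 : 'rV[R]_p -> R) (N2 : 'rV[R]_q -> R)
    (A : set 'rV[R]_m) (B : set 'rV[R]_p)
    (F : 'rV[R]_m -> 'rV[R]_p -> 'rV[R]_q) : \bar R :=
  ereal_sup [set e | exists a b1 b2, [/\ A a, B b1, B b2, b1 != b2 &
      e = (N2 (F a b1 - F a b2) / N1 (b1 - b2))%:E]].

Definition osLip_x (R : realType) (nx nz : nat)
    (wp : 'rV[R]_nx -> 'rV[R]_nx -> R) (N : 'rV[R]_nx -> R)
    (X : set 'rV[R]_nx) (Z : set 'rV[R]_nz)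
    (f : 'rV[R]_nx -> 'rV[R]_nz -> 'rV[R]_nx) : \bar R :=
  ereal_sup [set e | exists x1 x2 z, [/\ X x1, X x2, Z z, x1 != x2 &
      e = (wp (f x1 z - f x2 z) (x1 - x2) / N (x1 - x2) ^+ 2)%:E]].

Definition samp_index (R : realType) (T t : R) : nat := Num.truncn (t / T).

(* A solution of the sampled-data interconnection
     xdot = f(x, z(t)),  z_k = G^n(x(kT), z_{k-1}),  z(t) = z_k on [kT,(k+1)T),
   given by the continuous part x : R -> R^nx (considered on t >= 0),
   the initial memory z_{-1} = zm1 and the sequence zd k = z_k. *)
Definition is_solution (R : realType) (nx nz : nat)
    (f : 'rV[R]_nx -> 'rV[R]_nz -> 'rV[R]_nx)
    (G : 'rV[R]_nx -> 'rV[R]_nz -> 'rV[R]_nz) (n : nat) (T : R)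
    (x : R -> 'rV[R]_nx) (zm1 : 'rV[R]_nz) (zd : nat -> 'rV[R]_nz) : Prop :=
  [/\ {within [set t : R | 0 <= t], continuous x},
      (forall k : nat, zd k = iter n (G (x (k%:R * T)))
                                 (if k is k'.+1 then zd k' else zm1)) &
      (forall (k : nat) (t : R), k%:R * T < t < k.+1%:R * T ->
          is_derive t (1 : R) x (f (x t) (zd k)))].

Definition z_of (R : realType) (nz : nat) (T : R) (zd : nat -> 'rV[R]_nz)
    (t : R) : 'rV[R]_nz := zd (samp_index T t).

Definition cmp_norm (R : realType) (nx nz : nat)
    (Nx : 'rV[R]_nx -> R) (Nz : 'rV[R]_nz -> R) (eta1 eta2 : R)
    (x : 'rV[R]_nx) (z : 'rV[R]_nz) : R :=
  Num.sqrt (eta1 * Nx x ^+ 2 + eta2 * Nz z ^+ 2).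

(* Main.v *)
Require Import Defs.
From HB Require Import structures.
From mathcomp Require Import all_boot all_order all_algebra.
From mathcomp Require Import all_classical all_reals all_analysis.
From mathcomp Require Import ring lra.
Import Order.TTheory GRing.Theory Num.Theory.
Import numFieldNormedType.Exports.
Local Open Scope classical_set_scope.
Local Open Scope ring_scope.


Lemma within_ed {R : realType} {V : normedModType R} {A : set R} {f : R -> V} {x eps : R} :
  {within A, continuous f} -> A x -> 0 < eps ->
  exists2 d : R, 0 < d & forall y, A y -> `|x - y| < d -> `|f x - f y| < eps.
Proof.
move=> /subspace_continuousP fc Ax e0.
move/cvgrPdist_lt: (fc x Ax) => /(_ eps e0).
rewrite /within => /nbhs_ballP [d d0 H].
exists d => // y Ay xy; apply: H => //.
Qed.

Lemma first_zero (R : realType) (chi : R -> R) t0 t1 :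
  t0 <= t1 -> {within `[t0, t1], continuous chi} -> chi t0 < 0 ->
  (forall t, t0 < t -> t < t1 -> chi t = 0 -> forall d, 0 < d ->
     exists h, [/\ 0 < h, h < d, t0 <= t - h & 0 <= chi (t - h)]) ->
  chi t1 <= 0.
Proof.
move=> t01 cc c0 H; rewrite leNgt; apply/negP => c1.
pose S := [set t | t0 <= t <= t1 /\ 0 <= chi t].
have S1 : S t1 by split; [rewrite t01 lexx | exact: ltW].
have lbS : has_lbound S by exists t0 => y [/andP[]].
have hiS : has_inf S by split => //; exists t1.
set s := inf S.
have s0 : t0 <= s by apply: lb_le_inf => //; [exists t1 | move=> y [/andP[]]].
have s1 : s <= t1 by apply: (ge_inf lbS).
have sA : [set` `[t0, t1]] s by rewrite /= in_itv /= s0 s1.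
have C1 : forall t, t0 <= t -> t < s -> chi t < 0.
  move=> t tt ts; rewrite ltNge; apply/negP => ct.
  have : s <= t by apply: (ge_inf lbS); split => //; rewrite tt /= (ltW (lt_le_trans ts s1)).
  by rewrite leNgt ts.
have C2 : 0 <= chi s.
  rewrite leNgt; apply/negP => cs.
  have cs0 : 0 < - chi s by rewrite oppr_gt0.
  have [d d0 Hd] := within_ed cc sA cs0.
  have [u Su us] := inf_adherent d0 hiS.
  have su : s <= u by apply: (ge_inf lbS).
  have uA : [set` `[t0, t1]] u by case: Su => /andP[a b] _; rewrite /= in_itv /= a b.
  have sud : `|s - u| < d by rewrite distrC ger0_norm ?subr_ge0 //; rewrite -/s in us; lra.
  have := Hd u uA sud.
  case: Su => _ cu.
  rewrite ltr_norml => /andP[h1 h2]; lra.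
have C3 : chi s = 0.
  apply/eqP; rewrite eq_le C2 andbT leNgt; apply/negP => cs.
  have st0 : t0 < s by rewrite lt_neqAle s0 andbT; apply/eqP => e; move: c0; rewrite e; lra.
  have := @IVT R chi t0 s 0 s0 (continuous_subspaceW _ cc).
  case.
  - by move=> x; rewrite /= !in_itv /= => /andP[a b]; rewrite a (le_trans b s1).
  - by rewrite ge_min (ltW c0) le_max (ltW cs) orbT.
  move=> c; rewrite in_itv /= => /andP[a b] cc0.
  have : c < s by rewrite lt_neqAle b andbT; apply/eqP => e; move: cs; rewrite -e cc0 ltxx.
  by move/(C1 c a); rewrite cc0 ltxx.
have st0 : t0 < s by rewrite lt_neqAle s0 andbT; apply/eqP => e; move: c0; rewrite e; lra.
have st1 : s < t1 by rewrite lt_neqAle s1 andbT; apply/eqP => e; move: c1; rewrite -e; lra.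
have d0 : 0 < s - t0 by lra.
have [h [h0 hd th ch]] := H s st0 st1 C3 (s - t0) d0.
have shs : s - h < s by lra.
have := C1 (s - h) th shs; lra.
Qed.
Lemma deriv_left {R : realType} {V : normedModType R} {f : R -> V} {t : R} {d : V} {eps : R} :
  is_derive t (1:R) f d -> 0 < eps ->
  exists2 del : R, 0 < del & forall h, 0 < h -> h < del ->
    `|d - h^-1 *: (f t - f (t - h))| < eps.
Proof.
move=> [fd dv] e0.
have H : (fun h : R => h^-1 *: ((f \o shift t) (h *: 1) - f t)) @ 0^' --> d.
  by rewrite -dv; exact: fd.
move/cvgrPdist_lt : H => /(_ eps e0) /nbhs_ballP [del d0 Hd].
exists del => // h h0 hd.
have := Hd (- h).
rewrite -ball_normE /ball_ /= sub0r opprK gtr0_norm // => /(_ hd).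
rewrite oppr_eq0 gt_eqF //= => /(_ isT).
rewrite /shift /= scaler1 invrN scaleNr -scalerN opprB addrC.
by rewrite [- h + t]addrC [X in `|X|]addrC.
Qed.

Lemma pderiv {R : realType} (A B c t0 t : R) :
  is_derive t (1:R) (fun s => A * expR (c * (s - t0)) + B) (c * A * expR (c * (t - t0))).
Proof.
apply: trigger_derive; rewrite /GRing.scale /= subr0 mulr1 addr0; ring.
Qed.

Lemma within_contB (R : realType) (A : set R) (f g : R -> R) :
  {within A, continuous f} -> continuous g -> {within A, continuous (fun t => f t - g t)}.
Proof.
move=> /subspace_continuousP fc gc; apply/subspace_continuousP => x Ax.
apply: cvgB; first exact: fc.
exact: cvg_within_filter (gc x).
Qed.
Lemma compare (R : realType) (phi : R -> R) (t0 t1 c K : R) :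
  c < 0 -> t0 <= t1 -> {within `[t0, t1], continuous phi} ->
  (forall t, t0 < t -> t < t1 -> forall eps, 0 < eps ->
     exists2 del, 0 < del & forall h, 0 < h -> h < del ->
       phi t - phi (t - h) <= h * (c * phi t + K + eps)) ->
  phi t1 <= expR (c * (t1 - t0)) * phi t0 + (1 - expR (c * (t1 - t0))) * (K / - c).
Proof.
move=> c0 t01 pc Hd.
set E := expR (c * (t1 - t0)).
have E0 : 0 < E by rewrite expR_gt0.
have E1 : E <= 1 by rewrite -expR0 ler_expR; apply: mulr_le0_ge0; lra.
have ic0 : 0 < 1 / - c by rewrite divr_gt0 //; lra.
apply/ler_addgt0Pr => e e0.
pose ep := e / (1 + 1 / - c).
have ep0 : 0 < ep by rewrite divr_gt0 //; lra.
have epe : ep * (1 + 1 / - c) = e by rewrite /ep mulrVK //; rewrite unitfE; lra.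
pose B := (K + ep) / - c.
pose A := phi t0 + ep - B.
pose p := fun s => A * expR (c * (s - t0)) + B.
have cB : - c * B = K + ep by rewrite /B mulrC mulfVK //; lra.
have : (fun t => phi t - p t) t1 <= 0.
  apply: (@first_zero R (fun t => phi t - p t) t0 t1) => //.
  - apply: within_contB => // x.
    move: (pderiv A B c t0 x) => [dd _]; move: dd.
    by move/derivable1_diffP/differentiable_continuous.
  - by rewrite /p subrr mulr0 expR0 mulr1 /A; lra.
  move=> t tt0 tt1 ct d d0.
  have ep2 : 0 < ep / 2 by lra.
  have [d1 d10 H1] := Hd t tt0 tt1 _ ep2.
  have [d2 d20 H2] := deriv_left (pderiv A B c t0 t) ep2.
  pose m := Num.min (Num.min d1 d2) (Num.min d (t - t0)).
  have m0 : 0 < m by rewrite !lt_min d10 d20 d0 /=; lra.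
  have md1 : m <= d1 by rewrite /m !ge_min lexx.
  have md2 : m <= d2 by rewrite /m !ge_min lexx orbT.
  have md : m <= d by rewrite /m !ge_min lexx !orbT.
  have mt : m <= t - t0 by rewrite /m !ge_min lexx !orbT.
  exists (m / 2); split; try lra.
  have h0 : 0 < m / 2 by lra.
  have := H1 (m/2) h0 (ltac:(lra)).
  have := H2 (m/2) h0 (ltac:(lra)).
  set h := m / 2.
  set q := p t - p (t - h).
  rewrite /GRing.scale /=.
  set p' := c * A * expR (c * (t - t0)).
  have pt : phi t = p t by move: ct; lra.
  have pp : p' = c * p t + K + ep by rewrite -addrA -cB /p' /p; ring.
  rewrite ltr_norml => /andP[_ hq1].
  have hq : h * (p' - ep / 2) <= q.
    have -> : q = h * (h^-1 * q) by rewrite mulrA divff ?mul1r // gt_eqF.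
    by apply: ler_wpM2l; [apply: ltW | lra].
  have ee : h * (c * phi t + K + ep / 2) = h * (p' - ep / 2) by rewrite pp pt; congr (_ * _); lra.
  rewrite ee /q; move: hq pt; rewrite /q; move: (h * (p' - ep / 2)) (p t) (p (t - h)) (phi t) (phi (t - h)) => a1 a2 a3 a4 a5; lra.
rewrite /= /p /A /B => h.
have : phi t1 <= (phi t0 + ep) * E + (K + ep) / - c * (1 - E) by rewrite /E; lra.
move=> h'; apply: (le_trans h').
have -> : (K + ep) / - c * (1 - E) = (K / - c) * (1 - E) + ep * (1 / - c) * (1 - E) by rewrite !mulrDl; ring.
have : ep * (1 / - c) * (1 - E) <= ep * (1 / -c).
  by rewrite -[X in _ <= X]mulr1 ler_wpM2l //; [apply: mulr_ge0; lra | lra].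
have : ep * E <= ep by rewrite -[X in _ <= X]mulr1 ler_wpM2l //; lra.
rewrite -epe; lra.
Qed.




Section NormFacts.
Variables (R : realType) (n : nat) (N : 'rV[R]_n -> R).
Hypothesis hN : is_norm N.

Lemma N_ge0 x : 0 <= N x. Proof. by case: hN. Qed.
Lemma NZ a x : N (a *: x) = `|a| * N x. Proof. by case: hN. Qed.
Lemma N_tri x y : N (x + y) <= N x + N y. Proof. by case: hN. Qed.
Lemma N0 : N 0 = 0. Proof. by rewrite -(scale0r (0 : 'rV[R]_n)) NZ normr0 mul0r. Qed.
Lemma NN x : N (- x) = N x. Proof. by rewrite -scaleN1r NZ normrN normr1 mul1r. Qed.
Lemma N_gt0 x : x != 0 -> 0 < N x.
Proof. move=> x0; rewrite lt_neqAle N_ge0 andbT; apply/eqP => /esym h.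
by case: hN => _ h0 _ _; move: x0; rewrite (h0 _ h) eqxx. Qed.
Lemma N_sub x y : N x - N y <= N (x - y).
Proof. have := N_tri (x - y) y; rewrite subrK; lra. Qed.
Lemma N_dist x y : `|N x - N y| <= N (x - y).
Proof. rewrite ler_norml N_sub andbT; have h := N_sub y x; rewrite -(NN (y - x)) opprB in h; lra. Qed.

Lemma N_bound : exists C, 0 < C /\ forall x, N x <= C * `|x|.
Proof.
exists (1 + \sum_(j < n) N (delta_mx 0 j)); split.
  rewrite ltr_pwDl //; apply: sumr_ge0 => j _; exact: N_ge0.
move=> x; rewrite mulrDl mul1r.
have H : N x <= \sum_(j < n) `|x| * N (delta_mx 0 j).
  rewrite {1}(row_sum_delta x).
  elim/big_ind2: _ => //.
  - by rewrite N0.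
  - by move=> a b c d h1 h2; apply: le_trans (N_tri _ _) _; apply: lerD.
  move=> j _; rewrite NZ; apply: ler_wpM2r; first exact: N_ge0.
  have -> : `|x| = mx_norm x by [].
  rewrite mx_normrE; exact: (le_bigmax _ _ (0, j)).
apply: le_trans H _; rewrite -mulr_sumr mulrC ler_wpDl //.
Qed.

Lemma N_cont : continuous N.
Proof.
have [C [C0 HC]] := N_bound.
move=> x; apply/(@cvgrPdist_lt _ _ _ (nbhs x) _) => e e0.
apply/nbhs_ballP; exists (e / C); first exact: divr_gt0.
move=> y; rewrite -ball_normE /ball_ /= => hy.
apply: le_lt_trans (N_dist _ _) _; apply: le_lt_trans (HC _) _.
by rewrite -ltr_pdivlMl // mulrC.
Qed.
End NormFacts.
Arguments N_ge0 {R n N} hN x.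
Arguments NZ {R n N} hN a x.
Arguments N_tri {R n N} hN x y.
Arguments N0 {R n N} hN.
Arguments NN {R n N} hN x.
Arguments N_gt0 {R n N} hN x.
Arguments N_sub {R n N} hN x y.
Arguments N_dist {R n N} hN x y.
Arguments N_bound {R n N} hN.
Arguments N_cont {R n N} hN.

Section WPFacts.
Variables (R : realType) (n : nat) (N : 'rV[R]_n -> R) (wp : 'rV[R]_n -> 'rV[R]_n -> R).
Hypotheses (hN : is_norm N) (hwp : is_weak_pairing wp) (hc : wp_compatible wp N).

Lemma wp_le x y : wp x y <= N x * N y.
Proof.
case: hwp => _ _ _ _ cs; apply: le_trans (ler_norm _) _; apply: le_trans (cs x y) _.
by rewrite !hc !sqrtr_sqr !ger0_norm ?N_ge0.
Qed.
Lemma wp_sub x1 x2 y : wp (x1 + x2) y <= wp x1 y + wp x2 y.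
Proof. by case: hwp => [[h _]] _ _ _ _. Qed.
Lemma wp_scale a x y : 0 <= a -> wp (a *: x) y = a * wp x y.
Proof. by case: hwp => _ h _ _ _ /(h _ x y) []. Qed.
Lemma wp_x0 x : wp x 0 = 0.
Proof.
case: hwp => _ h _ _ _; have [_ ] := h 0 x 0 (lexx _).
by rewrite scale0r mul0r.
Qed.
Lemma wp_cont y : continuous (fun x => wp x y).
Proof. by case: hwp => [[_ h]] _ _ _ _. Qed.

Lemma curve (e : R -> 'rV[R]_n) t d eps :
  is_derive t (1:R) e d -> e t != 0 -> 0 < eps ->
  exists2 del, 0 < del & forall h, 0 < h -> h < del ->
    N (e t) - N (e (t - h)) <= h * (wp d (e t) / N (e t) + eps).
Proof.
move=> ed et0 e0.
set y := e t.
have Ny0 : 0 < N y by apply: N_gt0.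
have eN0 : 0 < eps * N y by apply: mulr_gt0.
have := wp_cont y d.
move/(@cvgrPdist_lt _ _ _ (nbhs d) _) => /(_ _ eN0) /nbhs_ballP [d1 d10 Hd1].
have [del del0 Hdel] := deriv_left ed d10.
exists del => // h h0 hdel.
set v := h^-1 *: (y - e (t - h)).
have hv : wp v y < wp d y + eps * N y.
  have : ball d d1 v by rewrite -ball_normE /ball_ /=; apply: Hdel.
  move/Hd1; rewrite /= ltr_norml => /andP[h1 _]; lra.
have ev : e (t - h) + h *: v = y by rewrite /v scalerA divff ?gt_eqF // scale1r addrC subrK.
have key : N y * N y <= N (e (t - h)) * N y + h * (wp d y + eps * N y).
  have -> : N y * N y = wp y y by rewrite hc expr2.
  rewrite -{1}ev; apply: le_trans (wp_sub _ _ _) _.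
  apply: lerD; first exact: wp_le.
  rewrite wp_scale; last exact: ltW.
  by apply: ler_wpM2l; [exact: ltW | exact: ltW].
rewrite -(ler_pM2r Ny0).
have -> : h * (wp d y / N y + eps) * N y = h * (wp d y + eps * N y) by field; rewrite gt_eqF.
lra.
Qed.
End WPFacts.
Arguments wp_le {R n N wp} hN hwp hc x y.
Arguments wp_sub {R n wp} hwp x1 x2 y.
Arguments wp_scale {R n wp} hwp a x y.
Arguments wp_x0 {R n wp} hwp x.
Arguments wp_cont {R n wp} hwp y.
Arguments curve {R n N wp} hN hwp hc e t d eps.
Lemma cs2 (R : realFieldType) (A1 A2 w1 w2 : R) : 0 <= A1 -> 0 <= A2 ->
  (A1 * w1 + A2 * w2) ^+ 2 <= (A1 + A2) * (A1 * w1 ^+ 2 + A2 * w2 ^+ 2).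
Proof.
move=> a1 a2.
have : 0 <= A1 * A2 * (w1 - w2) ^+ 2 by apply: mulr_ge0; [apply: mulr_ge0 | apply: sqr_ge0].
move=> h; rewrite -subr_ge0; suff -> : (A1 + A2) * (A1 * w1 ^+ 2 + A2 * w2 ^+ 2) - (A1 * w1 + A2 * w2) ^+ 2 = A1 * A2 * (w1 - w2) ^+ 2 by [].
ring.
Qed.

Lemma row_bound (R : realFieldType) (m1 m2 u1 u2 y1 y2 z rho : R) :
  0 <= m1 -> 0 <= m2 -> 0 < u1 -> 0 < u2 -> 0 <= rho ->
  m1 * u1 + m2 * u2 <= rho -> 0 <= z -> z <= m1 * y1 + m2 * y2 ->
  z ^+ 2 <= rho * (m1 * (y1 ^+ 2 / u1) + m2 * (y2 ^+ 2 / u2)).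
Proof.
move=> m10 m20 u10 u20 r0 hr z0 hz.
have := @cs2 R (m1 * u1) (m2 * u2) (y1 / u1) (y2 / u2) (mulr_ge0 m10 (ltW u10)) (mulr_ge0 m20 (ltW u20)).
have u1n : u1 != 0 by rewrite gt_eqF.
have u2n : u2 != 0 by rewrite gt_eqF.
have -> : m1 * u1 * (y1 / u1) = m1 * y1 by field.
have -> : m2 * u2 * (y2 / u2) = m2 * y2 by field.
have -> : m1 * u1 * (y1 / u1) ^+ 2 = m1 * (y1 ^+ 2 / u1) by field.
have -> : m2 * u2 * (y2 / u2) ^+ 2 = m2 * (y2 ^+ 2 / u2) by field.
move=> h.
have s0 : 0 <= m1 * (y1 ^+ 2 / u1) + m2 * (y2 ^+ 2 / u2).
  apply: addr_ge0; apply: mulr_ge0 => //; apply: divr_ge0; rewrite ?sqr_ge0 // ltW //.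
apply: le_trans (le_trans h _).
  rewrite expr2 [X in _ <= X]expr2; apply: ler_pM => //; apply: le_trans hz.
apply: ler_wpM2r => //.
Qed.

Lemma quad2 (R : realFieldType) (m11 m12 m21 m22 u1 u2 v1 v2 rho y1 y2 z1 z2 : R) :
  0 <= m11 -> 0 <= m12 -> 0 <= m21 -> 0 <= m22 ->
  0 < u1 -> 0 < u2 -> 0 < v1 -> 0 < v2 -> 0 <= rho ->
  m11 * u1 + m12 * u2 <= rho * u1 -> m21 * u1 + m22 * u2 <= rho * u2 ->
  v1 * m11 + v2 * m21 <= rho * v1 -> v1 * m12 + v2 * m22 <= rho * v2 ->
  0 <= z1 -> z1 <= m11 * y1 + m12 * y2 -> 0 <= z2 -> z2 <= m21 * y1 + m22 * y2 ->
  v1 / u1 * z1 ^+ 2 + v2 / u2 * z2 ^+ 2 <= rho ^+ 2 * (v1 / u1 * y1 ^+ 2 + v2 / u2 * y2 ^+ 2).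
Proof.
move=> h11 h12 h21 h22 u10 u20 v10 v20 r0 hu1 hu2 hv1 hv2 z10 hz1 z20 hz2.
have u1n : u1 != 0 by rewrite gt_eqF.
have u2n : u2 != 0 by rewrite gt_eqF.
have r1 := @row_bound R _ _ _ _ _ _ _ _ h11 h12 u10 u20 (mulr_ge0 r0 (ltW u10)) hu1 z10 hz1.
have r2 := @row_bound R _ _ _ _ _ _ _ _ h21 h22 u10 u20 (mulr_ge0 r0 (ltW u20)) hu2 z20 hz2.
set Y1 := y1 ^+ 2 / u1 in r1 r2 *.
set Y2 := y2 ^+ 2 / u2 in r1 r2 *.
have Y10 : 0 <= Y1 by rewrite /Y1 divr_ge0 ?sqr_ge0 // ltW.
have Y20 : 0 <= Y2 by rewrite /Y2 divr_ge0 ?sqr_ge0 // ltW.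
have a1 : v1 / u1 * z1 ^+ 2 <= rho * (v1 * m11 * Y1 + v1 * m12 * Y2).
  have -> : rho * (v1 * m11 * Y1 + v1 * m12 * Y2) = v1 / u1 * (rho * u1 * (m11 * Y1 + m12 * Y2)) by field.
  by apply: ler_wpM2l => //; apply: divr_ge0; apply: ltW.
have a2 : v2 / u2 * z2 ^+ 2 <= rho * (v2 * m21 * Y1 + v2 * m22 * Y2).
  have -> : rho * (v2 * m21 * Y1 + v2 * m22 * Y2) = v2 / u2 * (rho * u2 * (m21 * Y1 + m22 * Y2)) by field.
  by apply: ler_wpM2l => //; apply: divr_ge0; apply: ltW.
have b1 : rho * ((v1 * m11 + v2 * m21) * Y1) <= rho * (rho * v1 * Y1).
  by apply: ler_wpM2l => //; apply: ler_wpM2r.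
have b2 : rho * ((v1 * m12 + v2 * m22) * Y2) <= rho * (rho * v2 * Y2).
  by apply: ler_wpM2l => //; apply: ler_wpM2r.
have e0 : rho ^+ 2 * (v1 / u1 * y1 ^+ 2 + v2 / u2 * y2 ^+ 2) = rho * (rho * v1 * Y1) + rho * (rho * v2 * Y2).
  by rewrite /Y1 /Y2; field; rewrite u1n u2n.
have e1 : rho * (v1 * m11 * Y1 + v1 * m12 * Y2) + rho * (v2 * m21 * Y1 + v2 * m22 * Y2) = rho * ((v1 * m11 + v2 * m21) * Y1) + rho * ((v1 * m12 + v2 * m22) * Y2) by ring.
lra.
Qed.

Lemma choose_eta (R : realFieldType) (al be de p : R) :
  0 < al -> al < 1 -> 0 < be -> 0 < de -> 0 <= p -> p < 1 ->
  de * be < (1 - al) * (1 - p) ->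
  exists u1 v1 rho : R, [/\ 0 < u1, 0 < v1, 0 < rho, rho < 1 &
   [/\ al * u1 + be * 1 <= rho * u1, de * al * u1 + (p + de * be) * 1 <= rho * 1,
       v1 * al + 1 * (de * al) <= rho * v1 & v1 * be + 1 * (p + de * be) <= rho * 1]].
Proof.
move=> a0 a1 b0 d0 p0 p1 hc.
have da0 : 0 < de * al by apply: mulr_gt0.
have aln : al != 0 by rewrite gt_eqF.
have den : de != 0 by rewrite gt_eqF.
have bn : be != 0 by rewrite gt_eqF.
have a1' : 0 < 1 - al by lra.
pose L := be / (1 - al). pose U := (1 - p - de * be) / (de * al).
have eL : L * (1 - al) = be by rewrite /L divfK // gt_eqF.
have eU : U * (de * al) = 1 - p - de * be by rewrite /U divfK // gt_eqF.
have LU : L < U.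
  have an : 1 - al != 0 by rewrite gt_eqF.
  have dn : de * al != 0 by rewrite gt_eqF.
  have k1 : L * ((1 - al) * (de * al)) = be * (de * al) by rewrite /L; field; rewrite ?an ?dn ?aln ?den ?bn.
  have k2 : U * ((1 - al) * (de * al)) = (1 - p - de * be) * (1 - al).
    by rewrite /U; field; rewrite ?an ?dn ?aln ?den ?bn.
  rewrite -(ltr_pM2r (mulr_gt0 a1' da0)) k1 k2; lra.
pose u1 := (L + U) / 2.
have u1L : L < u1 by rewrite /u1; lra.
have u1U : u1 < U by rewrite /u1; lra.
pose L' := de * al / (1 - al). pose U' := (1 - p - de * be) / be.
have eL' : L' * (1 - al) = de * al by rewrite /L' divfK // gt_eqF.
have eU' : U' * be = 1 - p - de * be by rewrite /U' divfK // gt_eqF.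
have LU' : L' < U'.
  have an : 1 - al != 0 by rewrite gt_eqF.
  have k1 : L' * ((1 - al) * be) = de * al * be by rewrite /L'; field; rewrite ?an ?dn ?aln ?den ?bn.
  have k2 : U' * ((1 - al) * be) = (1 - p - de * be) * (1 - al) by rewrite /U'; field; rewrite ?an ?dn ?aln ?den ?bn.
  rewrite -(ltr_pM2r (mulr_gt0 a1' b0)) k1 k2; lra.
pose v1 := (L' + U') / 2.
have v1L : L' < v1 by rewrite /v1; lra.
have v1U : v1 < U' by rewrite /v1; lra.
have L0 : 0 < L by rewrite /L divr_gt0.
have L'0 : 0 < L' by rewrite /L' divr_gt0.
have u10 : 0 < u1 by lra.
have v10 : 0 < v1 by lra.
have s1 : al * u1 + be < u1.
  have : L * (1 - al) < u1 * (1 - al) by rewrite ltr_pM2r.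
  rewrite eL; lra.
have s2 : de * al * u1 + (p + de * be) < 1.
  have : u1 * (de * al) < U * (de * al) by rewrite ltr_pM2r.
  rewrite eU; lra.
have s3 : v1 * al + de * al < v1.
  have : L' * (1 - al) < v1 * (1 - al) by rewrite ltr_pM2r.
  rewrite eL'; lra.
have s4 : v1 * be + (p + de * be) < 1.
  have : v1 * be < U' * be by rewrite ltr_pM2r.
  rewrite eU'; lra.
pose r1 := (al * u1 + be) / u1. pose r3 := (v1 * al + de * al) / v1.
have r1l : r1 < 1 by rewrite /r1 ltr_pdivrMr // mul1r.
have r3l : r3 < 1 by rewrite /r3 ltr_pdivrMr // mul1r.
have er1 : r1 * u1 = al * u1 + be by rewrite /r1 divfK // gt_eqF.
have er3 : r3 * v1 = v1 * al + de * al by rewrite /r3 divfK // gt_eqF.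
pose rho := Num.max (Num.max r1 (de * al * u1 + (p + de * be))) (Num.max r3 (v1 * be + (p + de * be))).
exists u1, v1, rho; split => //.
- rewrite /rho !lt_max; apply/orP; left; apply/orP; right.
  have : 0 < de * al * u1 by apply: mulr_gt0.
  have : 0 < de * be by apply: mulr_gt0.
  lra.
- by rewrite /rho !gt_max r1l r3l /=; lra.
rewrite !mulr1 !mul1r; split.
- rewrite -er1; apply: ler_wpM2r; first exact: ltW.
  by rewrite /rho !le_max lexx.
- by rewrite /rho !le_max lexx !orbT.
- rewrite -er3 [rho * v1]mulrC [r3 * v1]mulrC; apply: ler_wpM2l; first exact: ltW.
  by rewrite /rho !le_max lexx !orbT.
- by rewrite /rho !le_max lexx !orbT.
Qed.
Lemma interval_est (R : realType) (nx nz : nat)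
  (Nx : 'rV[R]_nx -> R) (Nz : 'rV[R]_nz -> R)
  (wp : 'rV[R]_nx -> 'rV[R]_nx -> R)
  (X : set 'rV[R]_nx) (Z : set 'rV[R]_nz)
  (f : 'rV[R]_nx -> 'rV[R]_nz -> 'rV[R]_nx) (c a : R) :
  is_norm Nx -> is_norm Nz -> is_weak_pairing wp -> wp_compatible wp Nx ->
  c < 0 -> 0 <= a ->
  (forall x1 x2 z, X x1 -> X x2 -> Z z -> x1 != x2 ->
     wp (f x1 z - f x2 z) (x1 - x2) <= c * Nx (x1 - x2) ^+ 2) ->
  (forall x z1 z2, X x -> Z z1 -> Z z2 -> Nx (f x z1 - f x z2) <= a * Nz (z1 - z2)) ->
  forall (x xb : R -> 'rV[R]_nx) (z zb : 'rV[R]_nz) (t0 t1 : R),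
  t0 <= t1 ->
  {within `[t0, t1], continuous x} -> {within `[t0, t1], continuous xb} ->
  Z z -> Z zb ->
  (forall t, t0 < t -> t < t1 -> [/\ X (x t), X (xb t),
      is_derive t (1:R) x (f (x t) z) & is_derive t (1:R) xb (f (xb t) zb)]) ->
  Nx (x t1 - xb t1) <= expR (c * (t1 - t0)) * Nx (x t0 - xb t0)
     + (1 - expR (c * (t1 - t0))) * (a * Nz (z - zb) / - c).
Proof.
move=> hNx hNz hwp hc c0 a0 HosL HLf x xb z zb t0 t1 t01 xc xbc Zz Zzb Hs.
set K := a * Nz (z - zb).
have K0 : 0 <= K by apply: mulr_ge0 => //; exact: N_ge0.
apply: (@compare R (fun t => Nx (x t - xb t)) t0 t1 c K) => //.
  apply/subspace_continuousP => s As.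
  have H1 : (fun t => x t - xb t) @ within `[t0, t1] (nbhs s) --> (x s - xb s).
    apply: cvgB.
      exact: (proj1 (subspace_continuousP _ _) xc s As).
    exact: (proj1 (subspace_continuousP _ _) xbc s As).
  have := continuous_cvg _ (N_cont hNx (x s - xb s)) H1.
  exact.
move=> t tt0 tt1 eps e0.
have [Xx Xxb dx dxb] := Hs t tt0 tt1.
have de := is_deriveB dx dxb.
have [et0|et0] := eqVneq (x t - xb t) 0.
  exists 1 => // h h0 _.
  rewrite et0 (N0 hNx) mulr0.
  have := N_ge0 hNx (x (t - h) - xb (t - h)).
  have : 0 <= h * (K + eps) by apply: mulr_ge0; lra.
  lra.
have et0' : (x - xb) t != 0 by [].
have [del del0 Hdel] := curve hNx hwp hc _ _ _ _ de et0' e0.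
exists del => // h h0 hd.
have := Hdel h h0 hd; rewrite /= => H.
apply: (le_trans H); apply: ler_wpM2l; first exact: ltW.
rewrite lerD2r.
set d := x t - xb t.
have Nd0 : 0 < Nx d by apply: N_gt0.
rewrite ler_pdivrMr //.
have : wp (f (x t) z - f (xb t) zb) d <= c * Nx d ^+ 2 + K * Nx d.
  have -> : f (x t) z - f (xb t) zb = (f (x t) z - f (xb t) z) + (f (xb t) z - f (xb t) zb).
    by rewrite addrA subrK.
  apply: le_trans (wp_sub hwp _ _ _) _.
  apply: lerD.
    apply: HosL => //; by rewrite -subr_eq0.
  apply: le_trans (wp_le hNx hwp hc _ _) _.
  apply: ler_wpM2r; first exact: N_ge0.
  exact: HLf.
move=> h1; apply: (le_trans h1); rewrite expr2; lra.
Qed.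
Fixpoint gs {R : realType} (g : R) (m : nat) : R :=
  if m is m'.+1 then 1 + g * gs g m' else 0.

Lemma gs_ge0 {R : realType} (g : R) m : 0 <= g -> 0 <= gs g m.
Proof. by move=> g0; elim: m => //= m ih; apply: addr_ge0 => //; apply: mulr_ge0. Qed.

Lemma gs_ge1 {R : realType} (g : R) m : 0 <= g -> (0 < m)%N -> 1 <= gs g m.
Proof. by move=> g0; case: m => //= m _; rewrite lerDl; apply: mulr_ge0 => //; exact: gs_ge0. Qed.

Lemma gs_eq {R : realType} (g : R) m : (1 - g) * gs g m = 1 - g ^+ m.
Proof. elim: m => [|m ih] /=; first by rewrite mulr0 expr0 subrr.
by rewrite mulrDr mulr1 mulrCA ih exprS; ring. Qed.

Lemma iterG (R : realType) (nx nz : nat)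
  (Nx : 'rV[R]_nx -> R) (Nz : 'rV[R]_nz -> R)
  (X : set 'rV[R]_nx) (Z : set 'rV[R]_nz)
  (G : 'rV[R]_nx -> 'rV[R]_nz -> 'rV[R]_nz) (g gam : R) :
  is_norm Nx -> is_norm Nz -> 0 <= gam -> 0 <= g ->
  (forall x z, X x -> Z z -> Z (G x z)) ->
  (forall x1 x2 z, X x1 -> X x2 -> Z z -> Nz (G x1 z - G x2 z) <= g * Nx (x1 - x2)) ->
  (forall x z1 z2, X x -> Z z1 -> Z z2 -> Nz (G x z1 - G x z2) <= gam * Nz (z1 - z2)) ->
  forall m x x' z z', X x -> X x' -> Z z -> Z z' ->
   Z (iter m (G x) z) /\
   Nz (iter m (G x) z - iter m (G x') z') <= gam ^+ m * Nz (z - z') + g * gs gam m * Nx (x - x').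
Proof.
move=> hNx hNz gam0 g0 ZG HGx HGz m x x' z z' Xx Xx' Zz Zz'.
have Zi : forall y w, X y -> Z w -> forall k, Z (iter k (G y) w).
  by move=> y w Xy Zw; elim => //= k ih; exact: ZG.
split; first exact: Zi.
elim: m => [|m ih] /=.
  by rewrite expr0 mul1r mulr0 mul0r addr0.
have e : G x (iter m (G x) z) - G x' (iter m (G x') z') =
  (G x (iter m (G x) z) - G x' (iter m (G x) z)) + (G x' (iter m (G x) z) - G x' (iter m (G x') z')).
  by rewrite addrA subrK.
rewrite e; apply: le_trans (N_tri hNz _ _) _.
have h1 := HGx x x' _ Xx Xx' (Zi _ _ Xx Zz m).
have h2 := HGz x' _ _ Xx' (Zi _ _ Xx Zz m) (Zi _ _ Xx' Zz' m).
have h3 : gam * Nz (iter m (G x) z - iter m (G x') z') <=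
   gam * (gam ^+ m * Nz (z - z') + g * gs gam m * Nx (x - x')) by apply: ler_wpM2l.
apply: le_trans (lerD h1 (le_trans h2 h3)) _.
rewrite exprS le_eqVlt; apply/orP; left; apply/eqP; simpl; ring.
Qed.

Lemma zof_k (R : realType) (nz : nat) (T : R) (zd : nat -> 'rV[R]_nz) (k : nat) :
  0 < T -> z_of T zd (k%:R * T) = zd k.
Proof. by move=> T0; rewrite /z_of /samp_index mulfK ?gt_eqF // natrK. Qed.

Lemma efin {R : realType} {e : \bar R} : (-oo < e)%E -> (e < +oo)%E -> exists r, e = r%:E.
Proof. by case: e => [r| |] //; exists r. Qed.

Lemma Lip_snd_b (R : realType) (m p q : nat) (N1 : 'rV[R]_p -> R) (N2 : 'rV[R]_q -> R)
  A B (F : 'rV[R]_m -> 'rV[R]_p -> 'rV[R]_q) (a : R) :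
  is_norm N1 -> is_norm N2 -> Lip_snd N1 N2 A B F = a%:E ->
  forall x b1 b2, A x -> B b1 -> B b2 -> N2 (F x b1 - F x b2) <= a * N1 (b1 - b2).
Proof.
move=> h1 h2 La x b1 b2 Ax Bb1 Bb2.
have [->|ne] := eqVneq b1 b2; first by rewrite !subrr (N0 h1) (N0 h2) mulr0.
have N10 : 0 < N1 (b1 - b2) by apply: N_gt0 => //; rewrite subr_eq0.
rewrite -ler_pdivrMr //; rewrite -lee_fin -La.
by apply: ereal_sup_ubound; exists x, b1, b2.
Qed.

Lemma Lip_fst_b (R : realType) (m p q : nat) (N1 : 'rV[R]_m -> R) (N2 : 'rV[R]_q -> R)
  A B (F : 'rV[R]_m -> 'rV[R]_p -> 'rV[R]_q) (a : R) :
  is_norm N1 -> is_norm N2 -> Lip_fst N1 N2 A B F = a%:E ->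
  forall a1 a2 b, A a1 -> A a2 -> B b -> N2 (F a1 b - F a2 b) <= a * N1 (a1 - a2).
Proof.
move=> h1 h2 La a1 a2 b Aa1 Aa2 Bb.
have [->|ne] := eqVneq a1 a2; first by rewrite !subrr (N0 h1) (N0 h2) mulr0.
have N10 : 0 < N1 (a1 - a2) by apply: N_gt0 => //; rewrite subr_eq0.
rewrite -ler_pdivrMr //; rewrite -lee_fin -La.
by apply: ereal_sup_ubound; exists a1, a2, b.
Qed.
Lemma os_b (R : realType) (nx nz : nat) (wp : 'rV[R]_nx -> 'rV[R]_nx -> R) (N : 'rV[R]_nx -> R)
  X Z (f : 'rV[R]_nx -> 'rV[R]_nz -> 'rV[R]_nx) (c : R) :
  is_norm N -> osLip_x wp N X Z f = c%:E ->
  forall x1 x2 z, X x1 -> X x2 -> Z z -> x1 != x2 ->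
    wp (f x1 z - f x2 z) (x1 - x2) <= c * N (x1 - x2) ^+ 2.
Proof.
move=> hN Lc x1 x2 z X1 X2 Zz ne.
have N0' : 0 < N (x1 - x2) ^+ 2 by rewrite exprn_gt0 // N_gt0 // subr_eq0.
rewrite -ler_pdivrMr //; rewrite -lee_fin -Lc.
by apply: ereal_sup_ubound; exists x1, x2, z.
Qed.

Lemma os_le (R : realType) (nx nz : nat) (wp : 'rV[R]_nx -> 'rV[R]_nx -> R) (N : 'rV[R]_nx -> R)
  X Z (f : 'rV[R]_nx -> 'rV[R]_nz -> 'rV[R]_nx) :
  is_norm N -> is_weak_pairing wp -> wp_compatible wp N ->
  (osLip_x wp N X Z f <= Lip_fst N N X Z f)%E.
Proof.
move=> hN hwp hc; apply: ge_ereal_sup => e [x1 [x2 [z [X1 X2 Zz ne ->]]]].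
apply: le_trans (ereal_sup_ubound _) ; last by exists x1, x2, z.
rewrite lee_fin.
have N0' : 0 < N (x1 - x2) by rewrite N_gt0 // subr_eq0.
rewrite ler_pdivrMr ?exprn_gt0 // expr2 mulrA divfK ?gt_eqF //.
exact: wp_le.
Qed.

Lemma sup_ne (R : realType) (S : set (\bar R)) : ereal_sup S <> -oo%E -> exists e, S e.
Proof.
move=> H; apply: contrapT => H'; apply: H.
have -> : S = set0 by apply/seteqP; split => // e Se; apply: H'; exists e.
exact: ereal_sup0.
Qed.
Arguments Lip_snd_b {R m p q N1 N2 A B F a}.
Arguments Lip_fst_b {R m p q N1 N2 A B F a}.
Arguments os_b {R nx nz wp N X Z f c}.
Arguments os_le {R nx nz wp N X Z f}.
Arguments choose_eta {R al be de p}.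



Theorem theorem1 (R : realType) (nx nz : nat)
  (Nx : 'rV[R]_nx -> R) (Nz : 'rV[R]_nz -> R)
  (wp : 'rV[R]_nx -> 'rV[R]_nx -> R)
  (X : set 'rV[R]_nx) (Z : set 'rV[R]_nz)
  (f : 'rV[R]_nx -> 'rV[R]_nz -> 'rV[R]_nx)
  (G : 'rV[R]_nx -> 'rV[R]_nz -> 'rV[R]_nz) :
  is_norm Nx -> is_norm Nz ->
  is_weak_pairing wp -> wp_compatible wp Nx ->
  convex_set X -> convex_set Z ->
  X 0 -> Z 0 ->
  (forall x z, X x -> Z z -> Z (G x z)) ->
  {within [set p | X p.1 /\ Z p.2], continuous (fun p => f p.1 p.2)} ->
  {within [set p | X p.1 /\ Z p.2], continuous (fun p => G p.1 p.2)} ->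
  f 0 0 = 0 -> G 0 0 = 0 ->
  (* forward invariance of X x Z for the interconnected system *)
  (forall (n : nat) (T : R), (0 < n)%N -> 0 < T ->
     forall x zm1 zd, is_solution f G n T x zm1 zd -> X (x 0) -> Z zm1 ->
       forall t, 0 <= t -> X (x t) /\ Z (z_of T zd t)) ->
  (* (A1) *)
  (Lip_fst Nx Nx X Z f < +oo)%E ->
  (* (A2) *)
  (0 < Lip_snd Nz Nx X Z f < +oo)%E ->
  (0 < Lip_fst Nx Nz X Z G < +oo)%E ->
  (* (A3) *)
  (Lip_snd Nz Nz X Z G < 1)%E ->
  (- osLip_x wp Nx X Z f * (1 - Lip_snd Nz Nz X Z G)
     > Lip_snd Nz Nx X Z f * Lip_fst Nx Nz X Z G)%E ->
  forall (n : nat) (T : R), (0 < n)%N -> 0 < T ->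
  exists eta1 eta2 : R, 0 < eta1 /\ 0 < eta2 /\
    (* (i) T-discrete-time contractivity *)
    (exists b : R, 0 < b < 1 /\
      forall x zm1 zd xb zm1b zdb,
        is_solution f G n T x zm1 zd -> X (x 0) -> Z zm1 ->
        is_solution f G n T xb zm1b zdb -> X (xb 0) -> Z zm1b ->
        forall k : nat,
          cmp_norm Nx Nz eta1 eta2 (x (k%:R * T) - xb (k%:R * T))
                   (z_of T zd (k%:R * T) - z_of T zdb (k%:R * T))
          <= b ^+ k * cmp_norm Nx Nz eta1 eta2 (x 0 - xb 0)
                        (z_of T zd 0 - z_of T zdb 0)) /\
    (* (ii) global exponential stability of the origin *)
    (exists r a : R, 0 <= r /\ 0 < a /\
      forall x zm1 zd,
        is_solution f G n T x zm1 zd -> X (x 0) -> Z zm1 ->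
        forall t : R, 0 <= t ->
          cmp_norm Nx Nz eta1 eta2 (x t) (z_of T zd t)
          <= r * expR (- (a * t)) * cmp_norm Nx Nz eta1 eta2 (x 0) (z_of T zd 0)).
Proof.
move=> hNx hNz hwp hc _ _ X0 Z0 ZG _ _ f00 G00 Hinv HA1 /andP[Lf0 Lfoo] /andP[Lg0 Lgoo] HA3 Hcond n T n0 T0.
have [a Lfa] := efin (lt_trans (ltNyr 0) Lf0) Lfoo.
rewrite Lfa lte_fin in Lf0.
have [g Lga] := efin (lt_trans (ltNyr 0) Lg0) Lgoo.
rewrite Lga lte_fin in Lg0.
have [e1 [xa [z1 [z2 [Xxa Zz1 Zz2 z12 _]]]]] : exists e, [set e | exists a b1 b2, [/\ X a, Z b1, Z b2, b1 != b2 &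
      e = (Nx (f a b1 - f a b2) / Nz (b1 - b2))%:E]] e.
  by apply: sup_ne; rewrite -/(Lip_snd Nz Nx X Z f) Lfa.
have [e2 [x1 [x2 [zb [Xx1 Xx2 Zzb x12 _]]]]] : exists e, [set e | exists a1 a2 b, [/\ X a1, X a2, Z b, a1 != a2 &
      e = (Nz (G a1 b - G a2 b) / Nx (a1 - a2))%:E]] e.
  by apply: sup_ne; rewrite -/(Lip_fst Nx Nz X Z G) Lga.
have Lgam0 : (0%:E <= Lip_snd Nz Nz X Z G)%E.
  apply: le_trans (ereal_sup_ubound _); last by exists xa, z1, z2.
  by rewrite lee_fin divr_ge0 // N_ge0.
have [gam Lgama] := efin (lt_le_trans (ltNyr 0) Lgam0) (lt_trans HA3 (ltry 1)).
rewrite Lgama lee_fin in Lgam0.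
rewrite Lgama lte_fin in HA3.
have Lc0 : ((wp (f x1 zb - f x2 zb) (x1 - x2) / Nx (x1 - x2) ^+ 2)%:E <= osLip_x wp Nx X Z f)%E.
  by apply: ereal_sup_ubound; exists x1, x2, zb.
have [c Lca] := efin (lt_le_trans (ltNyr _) Lc0) (le_lt_trans (os_le hNx hwp hc) HA1).
rewrite Lfa Lga Lgama Lca in Hcond.
rewrite -EFinN -EFinB -!EFinM lte_fin in Hcond.
have gam1 : 0 < 1 - gam by lra.
have ag0 : 0 < a * g by apply: mulr_gt0.
have c0 : c < 0.
  rewrite ltNge; apply/negP => c0.
  have : - c * (1 - gam) <= 0 by rewrite mulNr oppr_le0; apply: mulr_ge0 => //; lra.
  lra.
have HLf := Lip_snd_b hNz hNx Lfa.
have HGx := Lip_fst_b hNx hNz Lga.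
have HGz := Lip_snd_b hNz hNz Lgama.
have HosL := os_b hNx Lca.
set al := expR (c * T).
have al0 : 0 < al by apply: expR_gt0.
have al1 : al < 1 by rewrite /al expR_lt1 pmulr_llt0.
set be := (1 - al) * (a / - c).
have ac0 : 0 < a / - c by apply: divr_gt0; lra.
have be0 : 0 < be by apply: mulr_gt0; lra.
set p := gam ^+ n.
have p0 : 0 <= p by apply: exprn_ge0.
have p1 : p < 1 by rewrite /p exprn_ilt1 // -lt0n.
set S := gs gam n.
have S1 : 1 <= S by apply: gs_ge1.
set de := g * S.
have de0 : 0 < de by apply: mulr_gt0; lra.
have hcond : de * be < (1 - al) * (1 - p).
  have k : g * (a / - c) < 1 - gam by rewrite mulrA ltr_pdivrMr; lra.
  have -> : de * be = ((1 - al) * S) * (g * (a / - c)) by rewrite /de /be; ring.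
  have -> : (1 - al) * (1 - p) = ((1 - al) * S) * (1 - gam) by rewrite /p -gs_eq /S; ring.
  by rewrite ltr_pM2l //; apply: mulr_gt0; lra.
have [u1 [v1 [rho [u10 v10 r0 r1 [hu1 hu2 hv1 hv2]]]]] := choose_eta al0 al1 be0 de0 p0 p1 hcond.
exists (v1 / u1), 1; split; first exact: divr_gt0.
have Hint : forall x zm1 zd xb zm1b zdb,
    is_solution f G n T x zm1 zd -> X (x 0) -> Z zm1 ->
    is_solution f G n T xb zm1b zdb -> X (xb 0) -> Z zm1b ->
    forall (k : nat) t0 t1, k%:R * T <= t0 -> t0 <= t1 -> t1 <= k.+1%:R * T ->
    Nx (x t1 - xb t1) <= expR (c * (t1 - t0)) * Nx (x t0 - xb t0)
       + (1 - expR (c * (t1 - t0))) * (a * Nz (zd k - zdb k) / - c).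
  move=> x zm1 zd xb zm1b zdb sol Xx0 Zm1 solb Xxb0 Zm1b k t0 t1 kt0 t01 t1k.
  have k0 : 0 <= k%:R * T by apply: mulr_ge0 => //; exact: ltW.
  have sub : [set` `[t0, t1]] `<=` [set t : R | 0 <= t].
    by move=> t; rewrite /= in_itv /= => /andP[h _]; lra.
  case: sol => xc zdd xd; case: solb => xbc zdbd xbd.
  apply: (@interval_est R nx nz Nx Nz wp X Z f c a hNx hNz hwp hc c0 (ltW Lf0) HosL HLf) => //.
  - exact: continuous_subspaceW sub xc.
  - exact: continuous_subspaceW sub xbc.
  - have := Hinv n T n0 T0 x zm1 zd (And3 xc zdd xd) Xx0 Zm1 _ k0.
    by rewrite zof_k // => -[].
  - have := Hinv n T n0 T0 xb zm1b zdb (And3 xbc zdbd xbd) Xxb0 Zm1b _ k0.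
    by rewrite zof_k // => -[].
  move=> t tt0 tt1.
  have t0' : 0 <= t by lra.
  have ktt : k%:R * T < t < k.+1%:R * T by apply/andP; split; lra.
  split.
  - by case: (Hinv n T n0 T0 x zm1 zd (And3 xc zdd xd) Xx0 Zm1 _ t0').
  - by case: (Hinv n T n0 T0 xb zm1b zdb (And3 xbc zdbd xbd) Xxb0 Zm1b _ t0').
  - exact: xd.
  - exact: xbd.
have Hstep : forall x zm1 zd xb zm1b zdb,
    is_solution f G n T x zm1 zd -> X (x 0) -> Z zm1 ->
    is_solution f G n T xb zm1b zdb -> X (xb 0) -> Z zm1b ->
    forall k : nat,
    v1 / u1 * Nx (x (k.+1%:R * T) - xb (k.+1%:R * T)) ^+ 2 + 1 * Nz (zd k.+1 - zdb k.+1) ^+ 2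
    <= rho ^+ 2 * (v1 / u1 * Nx (x (k%:R * T) - xb (k%:R * T)) ^+ 2 + 1 * Nz (zd k - zdb k) ^+ 2).
  move=> x zm1 zd xb zm1b zdb sol Xx0 Zm1 solb Xxb0 Zm1b k.
  set E := Nx (x (k%:R * T) - xb (k%:R * T)).
  set E' := Nx (x (k.+1%:R * T) - xb (k.+1%:R * T)).
  set W := Nz (zd k - zdb k).
  set W' := Nz (zd k.+1 - zdb k.+1).
  have kT0 : 0 <= k%:R * T by apply: mulr_ge0 => //; exact: ltW.
  have kT1 : k%:R * T <= k.+1%:R * T by rewrite ler_pM2r // ler_nat.
  have k1T0 : 0 <= k.+1%:R * T by lra.
  have hE : E' <= al * E + be * W.
    have := Hint x zm1 zd xb zm1b zdb sol Xx0 Zm1 solb Xxb0 Zm1b k _ _ (lexx _) kT1 (lexx _).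
    have -> : k.+1%:R * T - k%:R * T = T by rewrite -natr1; ring.
    rewrite -/al => h; apply: (le_trans h).
    by rewrite le_eqVlt; apply/orP; left; apply/eqP; rewrite /be /W /E; ring.
  have [Xk1 _] := Hinv n T n0 T0 x zm1 zd sol Xx0 Zm1 _ k1T0.
  have [Xbk1 _] := Hinv n T n0 T0 xb zm1b zdb solb Xxb0 Zm1b _ k1T0.
  have [_ Zk] := Hinv n T n0 T0 x zm1 zd sol Xx0 Zm1 _ kT0.
  have [_ Zbk] := Hinv n T n0 T0 xb zm1b zdb solb Xxb0 Zm1b _ kT0.
  rewrite zof_k // in Zk; rewrite zof_k // in Zbk.
  have hW : W' <= p * W + de * E'.
    case: sol => _ zdd _; case: solb => _ zdbd _.
    rewrite /W' (zdd k.+1) (zdbd k.+1) /=.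
    have [_ h] := @iterG R nx nz Nx Nz X Z G g gam hNx hNz Lgam0 (ltW Lg0) ZG HGx HGz n _ _ _ _ Xk1 Xbk1 Zk Zbk.
    by apply: (le_trans h); rewrite /p /W /de /S /E'.
  have E0 : 0 <= E by apply: N_ge0.
  have E'0 : 0 <= E' by apply: N_ge0.
  have W0 : 0 <= W by apply: N_ge0.
  have W'0 : 0 <= W' by apply: N_ge0.
  have hW2 : W' <= de * al * E + (p + de * be) * W.
    have : de * E' <= de * (al * E + be * W) by apply: ler_wpM2l => //; exact: ltW.
    lra.
  have := @quad2 R al be (de * al) (p + de * be) u1 1 v1 1 rho E W E' W'
    (ltW al0) (ltW be0) (mulr_ge0 (ltW de0) (ltW al0)) (addr_ge0 p0 (mulr_ge0 (ltW de0) (ltW be0)))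
    u10 ltr01 v10 ltr01 (ltW r0) hu1 hu2 hv1 hv2 E'0 hE W'0 hW2.
  by rewrite !divr1.
have Hi : forall x zm1 zd xb zm1b zdb,
    is_solution f G n T x zm1 zd -> X (x 0) -> Z zm1 ->
    is_solution f G n T xb zm1b zdb -> X (xb 0) -> Z zm1b ->
    forall k : nat,
      cmp_norm Nx Nz (v1 / u1) 1 (x (k%:R * T) - xb (k%:R * T))
               (z_of T zd (k%:R * T) - z_of T zdb (k%:R * T))
      <= rho ^+ k * cmp_norm Nx Nz (v1 / u1) 1 (x 0 - xb 0)
                    (z_of T zd 0 - z_of T zdb 0).
  move=> x zm1 zd xb zm1b zdb sol Xx0 Zm1 solb Xxb0 Zm1b.
  pose Q := fun k : nat => v1 / u1 * Nx (x (k%:R * T) - xb (k%:R * T)) ^+ 2 + 1 * Nz (zd k - zdb k) ^+ 2.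
  have HQ : forall k, Q k <= (rho ^+ 2) ^+ k * Q 0.
    elim => [|k ih]; first by rewrite expr0 mul1r.
    apply: le_trans (Hstep x zm1 zd xb zm1b zdb sol Xx0 Zm1 solb Xxb0 Zm1b k) _.
    by rewrite [(rho ^+ 2) ^+ k.+1]exprS -[rho ^+ 2 * _ * Q 0]mulrA ler_pM2l ?exprn_gt0.
  move=> k; rewrite /cmp_norm !zof_k //.
  have -> : v1 / u1 * Nx (x 0 - xb 0) ^+ 2 + 1 * Nz (z_of T zd 0 - z_of T zdb 0) ^+ 2 = Q 0%N.
    by rewrite /Q mul0r /z_of /samp_index mul0r truncn0.
  have -> : v1 / u1 * Nx (x (k%:R * T) - xb (k%:R * T)) ^+ 2 + 1 * Nz (zd k - zdb k) ^+ 2 = Q k by [].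
  apply: le_trans (ler_wsqrtr (HQ k)) _.
  rewrite exprAC sqrtrM ?sqr_ge0 // sqrtr_sqr ger0_norm //.
  by apply: exprn_ge0; exact: ltW.
split; first exact: ltr01.
split.
  exists rho; split; first by rewrite r0 r1.
  exact: Hi.
pose x0 := fun _ : R => (0 : 'rV[R]_nx).
pose zd0 := fun _ : nat => (0 : 'rV[R]_nz).
have iter0 : forall m, iter m (G 0) (0 : 'rV[R]_nz) = 0 by elim => //= m ->; rewrite G00.
have sol0 : is_solution f G n T x0 0 zd0.
  split.
  - by apply: continuous_subspaceT => y; exact: cvg_cst.
  - by move=> k; rewrite /zd0 /x0; case: k => [|k]; rewrite iter0.
  - by move=> k t _; rewrite /x0 /zd0 f00; exact: is_derive_cst.
set eta := v1 / u1.
have eta0 : 0 < eta by exact: divr_gt0.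
set K1 := a / - c.
have K10 : 0 <= K1 by exact: ltW.
set C := 2 + 2 * eta * K1 ^+ 2.
have C0 : 0 <= C.
  have : 0 <= eta * K1 ^+ 2 by apply: mulr_ge0; [exact: ltW | exact: sqr_ge0].
  rewrite /C; lra.
have lr : ln rho < 0 by apply: ln_lt0; rewrite r0 r1.
exists (Num.sqrt C / rho), (- ln rho / T); split.
  by apply: divr_ge0; [exact: sqrtr_ge0 | exact: ltW].
split; first by apply: divr_gt0 => //; rewrite oppr_gt0.
move=> x zm1 zd sol Xx0 Zm1 t t0.
set k := samp_index T t.
have tT0 : 0 <= t / T by apply: divr_ge0 => //; exact: ltW.
have [hk1 hk2] : k%:R * T <= t /\ t < k.+1%:R * T.
  have /andP[h1 h2] := truncn_itv tT0.
  by split; [rewrite -ler_pdivlMr | rewrite -ltr_pdivrMr].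
have hI := Hint x zm1 zd x0 0 zd0 sol Xx0 Zm1 sol0 X0 Z0 k _ _ (lexx _) hk1 (ltW hk2).
rewrite /x0 /zd0 !subr0 in hI.
have hii := Hi x zm1 zd x0 0 zd0 sol Xx0 Zm1 sol0 X0 Z0 k.
rewrite /x0 /zd0 /= !subr0 zof_k // in hii.
rewrite -/eta in hii.
set A := Nx (x (k%:R * T)) in hI hii *.
set W := Nz (zd k) in hI hii *.
set At := Nx (x t) in hI *.
set cmp0 := cmp_norm Nx Nz eta 1 (x 0) (z_of T zd 0) in hii *.
have -> : z_of T zd t = zd k by [].
set E' := expR (c * (t - k%:R * T)) in hI.
have E'0 : 0 < E' by apply: expR_gt0.
have E'1 : E' <= 1 by rewrite /E' expR_le1; apply: mulr_le0_ge0; lra.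
have A0 : 0 <= A by apply: N_ge0.
have W0 : 0 <= W by apply: N_ge0.
have At0 : 0 <= At by apply: N_ge0.
have hAt : At <= A + K1 * W.
  have h1 : E' * A <= A by apply: ler_piMl.
  have aW0 : 0 <= a * W / - c by apply: divr_ge0; [apply: mulr_ge0; lra | lra].
  have h2 : (1 - E') * (a * W / - c) <= a * W / - c by apply: ler_piMl; lra.
  have e : a * W / - c = K1 * W by rewrite /K1; ring.
  lra.
have hq : eta * At ^+ 2 + 1 * W ^+ 2 <= C * (eta * A ^+ 2 + 1 * W ^+ 2).
  have K1W0 : 0 <= K1 * W by apply: mulr_ge0.
  have h1 : At ^+ 2 <= (A + K1 * W) ^+ 2 by rewrite !expr2; apply: ler_pM.
  have h2 : (A + K1 * W) ^+ 2 <= 2 * A ^+ 2 + 2 * (K1 * W) ^+ 2.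
    have := sqr_ge0 (A - K1 * W); rewrite !expr2; lra.
  have h3 : eta * At ^+ 2 <= eta * (2 * A ^+ 2 + 2 * (K1 * W) ^+ 2).
    by apply: ler_wpM2l; [exact: ltW | exact: le_trans h1 h2].
  have h4 : 0 <= eta * K1 ^+ 2 * eta * A ^+ 2.
    by apply: mulr_ge0; [apply: mulr_ge0; [apply: mulr_ge0; [exact: ltW | exact: sqr_ge0] | exact: ltW] | exact: sqr_ge0].
  have h5 : 0 <= W ^+ 2 by exact: sqr_ge0.
  have q1 : C * (eta * A ^+ 2 + 1 * W ^+ 2) = 2 * eta * A ^+ 2 + 2 * (eta * K1 ^+ 2 * eta * A ^+ 2) + 2 * W ^+ 2 + 2 * eta * (K1 ^+ 2 * W ^+ 2) by rewrite /C; ring.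
  have q2 : eta * (2 * A ^+ 2 + 2 * (K1 * W) ^+ 2) = 2 * eta * A ^+ 2 + 2 * eta * (K1 ^+ 2 * W ^+ 2) by ring.
  lra.
have hr : rho ^+ k <= expR (- (- ln rho / T * t)) / rho.
  have hk' : t / T - 1 <= k%:R.
    have : t / T < k.+1%:R by rewrite ltr_pdivrMr.
    rewrite -natr1; lra.
  have -> : rho ^+ k = expR (k%:R * ln rho).
    by rewrite mulr_natl -lnXn // lnK // posrE exprn_gt0.
  have -> : expR (- (- ln rho / T * t)) / rho = expR ((t / T - 1) * ln rho).
    rewrite (_ : (t / T - 1) * ln rho = - (- ln rho / T * t) + - ln rho); last by field; rewrite gt_eqF.
    by rewrite expRD [expR (- ln rho)]expRN lnK ?posrE.
  rewrite ler_expR; apply: ler_wnM2r => //; exact: ltW.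
rewrite /cmp_norm -/(cmp_norm Nx Nz eta 1 (x t) (zd k)).
have -> : cmp_norm Nx Nz eta 1 (x t) (zd k) = Num.sqrt (eta * At ^+ 2 + 1 * W ^+ 2) by [].
apply: le_trans (ler_wsqrtr hq) _.
rewrite sqrtrM //.
have -> : Num.sqrt (eta * A ^+ 2 + 1 * W ^+ 2) = cmp_norm Nx Nz eta 1 (x (k%:R * T)) (zd k) by [].
have cmp00 : 0 <= cmp0 by apply: sqrtr_ge0.
have sC : 0 <= Num.sqrt C by apply: sqrtr_ge0.
apply: le_trans (ler_wpM2l sC hii) _.
have -> : Num.sqrt C / rho * expR (- (- ln rho / T * t)) * cmp0 = Num.sqrt C * (expR (- (- ln rho / T * t)) / rho * cmp0) by ring.
apply: ler_wpM2l => //; apply: ler_wpM2r => //.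
Qed.
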